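(* Let $q$ be a prime power, let $R$ be a finite local ring containing the field $\mathbb{F}_q$ as a subring, let $R^*$ be its set of units, $\delta=\dim_{\mathbb{F}_q}(R\setminus R^* )$, and let $F=R/(R\setminus R^* )$ (a field containing $\mathbb{F}_q$ via the quotient map). If the chain geometry $\Sigma(\mathbb{F}_q,F)$ contains a blocking set of size $x$, then $\Sigma(\mathbb{F}_q,R)$ contains a blocking set of size $xq^{\delta}$.
   Context: All rings are associative with unit element $1\neq 0$, and subrings share the unit. For a ring $S$, $S^2$ is regarded as a left $S$-module and the projective line $\mathbb{P}(S)$ is the set of all submodules of $S^2$ of the form $S(a,b)$ where $(a\ b)$ is the first row of some invertible $2\times 2$ matrix over $S$. For a field $K\subseteq S$ (as a subring), $\mathbb{P}(K)$ is embedded in $\mathbb{P}(S)$ via $K(a,b)\mapsto S(a,b)$. The chain geometry $\Sigma(K,S)$ has point set $\mathbb{P}(S)$ and its blocks, called chains, are the sets $\mathbb{P}(K)^g$ with $g\in\mathrm{GL}_2(S)$. A blocking set is a set $B$ of points such that every chain contains at least one element of $B$. *)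

(* Defs.v *)
From HB Require Import structures.
From mathcomp Require Import all_boot all_order all_algebra.
Set Implicit Arguments. Unset Strict Implicit. Unset Printing Implicit Defensive.
Import GRing.Theory.
Local Open Scope ring_scope.

Definition invertible2 (S : finUnitRingType) (g : 'M[S]_2) : Prop :=
  exists h : 'M[S]_2, g *m h = 1%:M /\ h *m g = 1%:M.

Definition admissible (S : finUnitRingType) (a b : S) : Prop :=
  exists M : 'M[S]_2, invertible2 M /\ M ord0 ord0 = a /\ M ord0 ord_max = b.

Definition cyc (S : finUnitRingType) (a b : S) : {set S * S} :=
  [set (r * a, r * b) | r : S].

Definition proj_point (S : finUnitRingType) (P : {set S * S}) : Prop :=
  exists a b : S, admissible a b /\ P = cyc a b.

(* chains of Sigma(K,S), K embedded in S via iota: the sets P(K)^g, g in GL_2(S);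
   the point S(a,b) is mapped by g to S((a b) g) *)
Definition chain (K S : finUnitRingType) (iota : K -> S) (C : {set {set S * S}}) : Prop :=
  exists g : 'M[S]_2, invertible2 g /\
    forall P : {set S * S}, P \in C <->
      exists a b : K, admissible a b /\
        P = cyc (iota a * g ord0 ord0 + iota b * g ord_max ord0)
                (iota a * g ord0 ord_max + iota b * g ord_max ord_max).

Definition blocking_set (K S : finUnitRingType) (iota : K -> S) (B : {set {set S * S}}) : Prop :=
  (forall P, P \in B -> proj_point P) /\
  (forall C, chain iota C -> exists P, P \in C /\ P \in B).

Definition local_ring (R : finUnitRingType) : Prop :=
  (forall x y : R, x \isn't a GRing.unit -> y \isn't a GRing.unit -> (x + y) \isn't a GRing.unit) /\
  (forall r x : R, x \isn't a GRing.unit ->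
      (r * x) \isn't a GRing.unit /\ (x * r) \isn't a GRing.unit).

Definition Kdim (K R : finUnitRingType) (iota : K -> R) (J : R -> Prop) (d : nat) : Prop :=
  exists b : 'I_d -> R, (forall i, J (b i)) /\
    forall r : R, J r <-> exists! c : {ffun 'I_d -> K}, r = \sum_(i < d) iota (c i) * b i.

(* Main.v *)
Require Import Defs.
From HB Require Import structures.
From mathcomp Require Import all_boot all_order all_algebra.
Import GRing.Theory.
Local Open Scope ring_scope.
Set Implicit Arguments. Unset Strict Implicit.

Section Gen.
Variable S : finUnitRingType.

Lemma cyc_mem (a b x y : S) : (x, y) \in cyc a b <-> exists r, x = r * a /\ y = r * b.
Proof.
split.
  by case/imsetP => r _ [-> ->]; exists r.
by case=> r [-> ->]; apply/imsetP; exists r.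
Qed.

Lemma cyc_self (a b : S) : (a, b) \in cyc a b.
Proof. by apply/cyc_mem; exists 1; rewrite !mul1r. Qed.

Lemma cyc_unitl (u v : S) : u \is a GRing.unit -> cyc u v = cyc 1 (u^-1 * v).
Proof.
move=> Hu; apply/setP => -[x y]; apply/idP/idP.
  case/cyc_mem => r [-> ->]; apply/cyc_mem; exists (r * u).
  by rewrite mulr1 mulrA mulrK.
case/cyc_mem => r [-> ->]; apply/cyc_mem; exists (r * u^-1).
by rewrite mulr1 mulrA mulrVK.
Qed.

Lemma cyc_unitr (u v : S) : v \is a GRing.unit -> cyc u v = cyc (v^-1 * u) 1.
Proof.
move=> Hv; apply/setP => -[x y]; apply/idP/idP.
  case/cyc_mem => r [-> ->]; apply/cyc_mem; exists (r * v).
  by rewrite mulr1 mulrA mulrK.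
case/cyc_mem => r [-> ->]; apply/cyc_mem; exists (r * v^-1).
by rewrite mulr1 mulrA mulrVK.
Qed.

Definition mx2 (a b c d : S) : 'M[S]_2 :=
  \matrix_(i < 2, j < 2) nth 0 (nth [::] [:: [:: a; b]; [:: c; d]] i) j.

Lemma mx2_mul a b c d a' b' c' d' :
  mx2 a b c d *m mx2 a' b' c' d' =
  mx2 (a * a' + b * c') (a * b' + b * d') (c * a' + d * c') (c * b' + d * d').
Proof.
apply/matrixP => i j; rewrite !mxE !big_ord_recl big_ord0 !mxE /= addr0.
by case: i => [[|[|i]] Hi] //; case: j => [[|[|j]] Hj].
Qed.

Lemma mx2_1 : mx2 1 0 0 1 = 1%:M.
Proof.
apply/matrixP => i j; rewrite !mxE.
by case: i => [[|[|i]] Hi] //; case: j => [[|[|j]] Hj].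
Qed.

Lemma adm_1 (t : S) : admissible 1 t.
Proof.
exists (mx2 1 t 0 1); split; last by rewrite !mxE.
exists (mx2 1 (- t) 0 1); rewrite !mx2_mul -mx2_1.
by rewrite !(mul1r, mulr1, mul0r, mulr0, add0r, addr0, subrr, addNr).
Qed.

Lemma adm_2 (j : S) : admissible j 1.
Proof.
exists (mx2 j 1 1 0); split; last by rewrite !mxE.
exists (mx2 0 1 1 (- j)); rewrite !mx2_mul -mx2_1.
by rewrite !(mul1r, mulr1, mul0r, mulr0, add0r, addr0, subrr, addNr, mulrN1, mulN1r).
Qed.

Lemma adm_nz (a b : S) : admissible a b -> a != 0 \/ b != 0.
Proof.
case=> M [[h [Hh _]] [Ha Hb]].
move/matrixP: Hh => /(_ ord0 ord0).
rewrite !mxE !big_ord_recl big_ord0 /= addr0.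
have -> : lift ord0 (@ord0 0) = ord_max by apply/val_inj.
rewrite Ha Hb.
case: (eqVneq a 0) => [->|]; last by left.
case: (eqVneq b 0) => [->|]; last by right.
by rewrite !mul0r addr0 => /eqP; rewrite eq_sym oner_eq0.
Qed.

End Gen.

Section Field.
Variable F : finFieldType.

Lemma Fpt_one (Q : {set F * F}) (c : F) : proj_point Q -> (1, c) \in Q -> Q = cyc 1 c.
Proof.
case=> a [b [Hab ->]] /cyc_mem [r [Hr Hc]].
have Ha : a != 0 by apply: contra_eq_neq Hr => ->; rewrite mulr0 oner_neq0.
have Hu : a \is a GRing.unit by rewrite unitfE.
rewrite (@cyc_unitl _ a b Hu) Hc.
have -> : r = a^-1 by rewrite -[r]mulr1 -(mulrV Hu) mulrA -Hr mul1r.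
by [].
Qed.

Lemma Fpt_none (Q : {set F * F}) : proj_point Q -> (forall c, (1, c) \notin Q) -> Q = cyc 0 1.
Proof.
case=> a [b [Hab ->]] Hn.
case: (eqVneq a 0) => [Ha0|Ha].
  move: Hab; rewrite Ha0 => /adm_nz [|Hb]; first by rewrite eqxx.
  have Hu : b \is a GRing.unit by rewrite unitfE.
  by rewrite (@cyc_unitr _ 0 b Hu) mulr0.
exfalso; move/negP: (Hn (a^-1 * b)); apply; apply/cyc_mem; exists a^-1.
by rewrite mulVf.
Qed.

End Field.

Definition lift (R F : finUnitRingType) (pi : R -> F) (c : F) : R :=
  odflt 0 [pick t | pi t == c].

Lemma liftP (R F : finUnitRingType) (pi : R -> F) c :
  (exists r, pi r = c) -> pi (lift pi c) = c.
Proof.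
case=> r Hr; rewrite /lift; case: pickP => [t /eqP //|/(_ r)].
by rewrite Hr eqxx.
Qed.

Definition Lmap (R F : finUnitRingType) (pi : R -> F) (Qj : {set F * F} * R) : {set R * R} :=
  match [pick c | (1, c) \in Qj.1] with
  | Some c => cyc 1 (lift pi c + Qj.2)
  | None => cyc Qj.2 1
  end.

From Stdlib Require Import ClassicalEpsilon.

Definition pb (P : Prop) : bool := if excluded_middle_informative P then true else false.
Lemma pbP (P : Prop) : pb P <-> P.
Proof. by rewrite /pb; case: excluded_middle_informative. Qed.

Theorem mainTheorem5
  (q : nat) (Fq : finFieldType) (hq : #|Fq| = q)
  (R : finUnitRingType) (iota : {rmorphism Fq -> R})
  (hloc : local_ring R)
  (delta : nat) (hdelta : Kdim iota (fun r : R => r \isn't a GRing.unit) delta)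
  (F : finFieldType) (pi : {rmorphism R -> F})
  (hpi_surj : forall y : F, exists r : R, pi r = y)
  (hpi_ker : forall r : R, pi r = 0 <-> r \isn't a GRing.unit)
  (x : nat) :
  (exists B : {set {set F * F}}, blocking_set (fun a : Fq => pi (iota a)) B /\ #|B| = x) ->
  exists B : {set {set R * R}}, blocking_set iota B /\ #|B| = (x * q ^ delta)%N.
Proof.
case=> B [[HBpt HBbl] HBx].
set J := [set r : R | r \isn't a GRing.unit].
have HJ : forall r, r \in J <-> pi r = 0.
  by move=> r; rewrite inE; split => [/hpi_ker|/hpi_ker].
have cardJ : #|J| = (q ^ delta)%N.
  case: hdelta => bs [HbJ Hrep].
  pose E := fun c : {ffun 'I_delta -> Fq} => \sum_(i < delta) iota (c i) * bs i.
  have HE : forall c, E c \isn't a GRing.unit.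
    move=> c; apply: (big_ind (fun r : R => r \isn't a GRing.unit)).
    - by rewrite unitr0.
    - by move=> ? ?; apply: hloc.1.
    - by move=> i _; exact: (hloc.2 _ _ (HbJ i)).1.
  have -> : J = E @: setT.
    apply/setP => r; rewrite inE; apply/idP/imsetP.
      by move=> /(proj1 (Hrep r)) [c [Hc _]]; exists c.
    by case=> c _ ->; apply: HE.
  rewrite card_in_imset ?cardsT ?card_ffun ?card_ord ?hq //.
  move=> c c' _ _ Heq.
  have [c0 [_ Hu]] := proj1 (Hrep (E c)) (HE c).
  by rewrite -(Hu c) // -(Hu c') // Heq.
have HLpt : forall Q j, proj_point (Lmap pi (Q, j)).
  move=> Q j; rewrite /Lmap; case: pickP => /= [c _|_].
    by exists 1, (lift pi c + j); split => //; apply: adm_1.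
  by exists j, 1; split => //; apply: adm_2.
have HLinj : {in setX B J &, injective (Lmap pi)}.
  move=> [Q j] [Q' j'] /setXP [HQ Hj] /setXP [HQ' Hj']; rewrite /Lmap /=.
  case: pickP => [c Hc|Hn]; case: pickP => [c' Hc'|Hn'] => /= E.
  - have := cyc_self 1 (lift pi c + j); rewrite E => /cyc_mem [r [Hr e]].
    move: e; rewrite mulr1 in Hr; rewrite -Hr mul1r => e.
    have Hcc : c = c'.
      have := congr1 pi e; rewrite !rmorphD !liftP //.
      by rewrite (proj1 (HJ j) Hj) (proj1 (HJ j') Hj') !addr0.
    subst c'.
    by rewrite (Fpt_one (HBpt _ HQ) Hc) (Fpt_one (HBpt _ HQ') Hc') (addrI _ e).
  - exfalso; have := cyc_self 1 (lift pi c + j); rewrite E => /cyc_mem [r [Hr _]].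
    have := congr1 pi Hr; rewrite rmorph1 rmorphM (proj1 (HJ j') Hj') mulr0.
    by move/eqP; rewrite oner_eq0.
  - exfalso; have := cyc_self 1 (lift pi c' + j'); rewrite -E => /cyc_mem [r [Hr _]].
    have := congr1 pi Hr; rewrite rmorph1 rmorphM (proj1 (HJ j) Hj) mulr0.
    by move/eqP; rewrite oner_eq0.
  - have := cyc_self j 1; rewrite E => /cyc_mem [r [e Hr]].
    move: e; rewrite mulr1 in Hr; rewrite -Hr mul1r => ->.
    have H1 : forall c, (1, c) \notin Q by move=> c; rewrite Hn.
    have H2 : forall c, (1, c) \notin Q' by move=> c; rewrite Hn'.
    by rewrite (Fpt_none (HBpt _ HQ) H1) (Fpt_none (HBpt _ HQ') H2).
exists (Lmap pi @: setX B J); split; last first.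
  by rewrite card_in_imset // cardsX HBx cardJ.
split.
  by move=> P /imsetP [[Q j] _ ->]; apply: HLpt.
move=> C [g [[h [H1 H2]] HC]].
pose gb := map_mx pi g.
pose Cb : {set {set F * F}} := [set P | pb (exists a b : Fq, admissible a b /\
        P = cyc (pi (iota a) * gb ord0 ord0 + pi (iota b) * gb ord_max ord0)
                (pi (iota a) * gb ord0 ord_max + pi (iota b) * gb ord_max ord_max))].
have HCb : chain (fun a : Fq => pi (iota a)) Cb.
  exists gb; split.
    exists (map_mx pi h); split; by rewrite -map_mxM ?H1 ?H2 map_mx1.
  by move=> P; rewrite inE pbP.
have [Q [/[!inE] /pbP [a [b [Hab HQe]]] HQB]] := HBbl _ HCb.
set u := iota a * g ord0 ord0 + iota b * g ord_max ord0.
set v := iota a * g ord0 ord_max + iota b * g ord_max ord_max.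
have HQ : Q = cyc (pi u) (pi v) by rewrite HQe /u /v !rmorphD !rmorphM !mxE.
exists (cyc u v); split; first by apply/HC; exists a, b.
have unit_of : forall w, pi w != 0 -> w \is a GRing.unit.
  move=> w Hw; apply/negPn/negP => /hpi_ker Hw0; by rewrite Hw0 eqxx in Hw.
case: (eqVneq (pi u) 0) => [Hu0|Hu0].
  have Hv0 : pi v != 0.
    apply/eqP => Hv0; have [a' [b' [Hab' HQ']]] := HBpt _ HQB.
    have := cyc_self a' b'; rewrite -HQ' HQ Hu0 Hv0 => /cyc_mem [r [Ha' Hb']].
    by move: (adm_nz Hab'); rewrite Ha' Hb' mulr0 eqxx; case.
  have Hvu := unit_of _ Hv0.
  apply/imsetP; exists (Q, v^-1 * u).
    apply/setXP; split => //; apply/HJ; by rewrite rmorphM Hu0 mulr0.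
  rewrite /Lmap /=; case: pickP => [c Hc|_]; last by rewrite (cyc_unitr _ Hvu).
  exfalso; move: Hc; rewrite HQ Hu0 => /cyc_mem [r [Hr _]].
  by move/eqP: Hr; rewrite mulr0 oner_eq0.
have Huu := unit_of _ Hu0.
set c := pi (u^-1 * v).
have HcQ : (1, c) \in Q.
  rewrite HQ; apply/cyc_mem; exists (pi u)^-1; rewrite mulVf //; split => //.
  by rewrite /c rmorphM rmorphV.
apply/imsetP; exists (Q, u^-1 * v - lift pi c).
  apply/setXP; split => //; apply/HJ; by rewrite rmorphB liftP // subrr.
rewrite /Lmap /=; case: pickP => [c' Hc'|Hn]; last by rewrite Hn in HcQ.
have Hc'c : c' = c.
  move: HcQ; rewrite (Fpt_one (HBpt _ HQB) Hc') => /cyc_mem [r [Hr ->]].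
  by rewrite mulr1 in Hr; rewrite -Hr mul1r.
by rewrite Hc'c addrC subrK (cyc_unitl _ Huu).
Qed.
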